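(* Let $n\ge 1$, let $C_u(v_1),\ldots,C_u(v_n)>0$ and $R_1,\ldots,R_n>0$ be sustainable, i.e. $R_i\le C_u(v_i)$ for all $i$, $\sum_{j\ne i}R_j\le C_d(v_i)$ for all $i$ (for some downlink capacities $C_d(v_i)>0$), and $(n-1)\sum_{i=1}^n R_i\le\sum_{i=1}^n C_u(v_i)$. Run the algorithm described in the context on these inputs. Then for every $\alpha$ with $1\le\alpha\le n$, $$\sum_{i=1}^n U_i[\alpha] \geq (n-2)\sum_{i=\alpha}^n R_i.$$
   Context: Sub-stream rate assigning algorithm. Input: $n$, uplink capacities $C_u(v_1),\ldots,C_u(v_n)$ and rates $R_1,\ldots,R_n$. Initialize $r_{i,j}:=0$ for all $1\le i,j\le n$ and $U_i := C_u(v_i)-R_i$ for $1\le i\le n$. Outer loop: for $i=1$ to $n$: set $R'_i := R_i$; inner loop: for $j=1$ to $n$: if $(n-2)R'_i > U_j$ then set $r_{i,j} := U_j/(n-2)$, else set $r_{i,j} := R'_i$; then set $U_j := U_j-(n-2)r_{i,j}$ and $R'_i := R'_i - r_{i,j}$; if $R'_i = 0$, exit the inner loop. Output all $r_{i,j}$. Notation: $U_i[\alpha]$ denotes the value of the variable $U_i$ at the start of iteration $\alpha$ of the outer loop. *)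

(* Defs.v *)
From HB Require Import structures.
From mathcomp Require Import all_boot all_order all_algebra.
Set Implicit Arguments. Unset Strict Implicit. Unset Printing Implicit Defensive.
Import Order.TTheory GRing.Theory Num.Theory.
Local Open Scope ring_scope.

(* Indices are 0-based: node v_{i+1} of the paper is index i, 0 <= i < n. *)

Section Algo.
Variables (R : realFieldType) (n : nat).

Definition nm2 : R := n%:R - 2.

Definition upd (U : nat -> R) (j : nat) (x : R) : nat -> R :=
  fun k => if k == j then x else U k.

Fixpoint inner_loop (U : nat -> R) (Rp : R) (js : seq nat) : (nat -> R) * R :=
  match js with
  | [::] => (U, Rp)
  | j :: js' =>
      let r := if nm2 * Rp > U j then U j / nm2 else Rp in
      let U' := upd U j (U j - nm2 * r) in
      let Rp' := Rp - r in
      if Rp' == 0 then (U', Rp') else inner_loop U' Rp' js'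
  end.

(* U after k complete iterations of the outer loop (i = 0, ..., k-1),
   starting from U_i := Cu i - Rr i.  Hence U_i[alpha] (paper, alpha 1-based)
   is  U_iter Cu Rr (alpha - 1) (i - 1). *)
Fixpoint U_iter (Cu Rr : nat -> R) (k : nat) : nat -> R :=
  match k with
  | 0 => fun i => Cu i - Rr i
  | k'.+1 => (inner_loop (U_iter Cu Rr k') (Rr k') (iota 0 n)).1
  end.

End Algo.

(* Main.v *)
Require Import Defs.
From HB Require Import structures.
From mathcomp Require Import all_boot all_order all_algebra.
Import Order.TTheory GRing.Theory Num.Theory.
From mathcomp Require Import ring lra.
Local Open Scope ring_scope.

Lemma sum_upd (R : realFieldType) (n : nat) (U : nat -> R) j x :
  (j < n)%N ->
  \sum_(0 <= i < n) upd U j x i = \sum_(0 <= i < n) U i + (x - U j).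
Proof.
move=> jn.
have jin : j \in index_iota 0 n by rewrite mem_index_iota.
have u : uniq (index_iota 0 n) by rewrite /index_iota iota_uniq.
rewrite (bigD1_seq j jin u) [in RHS](bigD1_seq j jin u) /=.
rewrite /upd eqxx.
rewrite (eq_bigr U); last by move=> i /negbTE ->.
ring.
Qed.

Lemma inner_sum (R : realFieldType) (n : nat) U Rp js :
  all (fun j => (j < n)%N) js ->
  \sum_(0 <= i < n) (inner_loop n U Rp js).1 i =
  \sum_(0 <= i < n) U i - nm2 R n * (Rp - (inner_loop n U Rp js).2).
Proof.
elim: js U Rp => [|j js IH] U Rp /=.
  by move=> _; rewrite subrr mulr0 subr0.
move=> /andP [jn H].
set r := (if U j < nm2 R n * Rp then _ else _).
case: (Rp - r =P 0) => [E|_] /=.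
  rewrite sum_upd // E. 
  have Er : Rp = r by apply: subr0_eq.
  rewrite subr0 Er; ring.
rewrite IH // sum_upd //.
set z := (inner_loop _ _ _ _).2.
ring.
Qed.

Lemma inner_nonneg (R : realFieldType) (n : nat) (U : nat -> R) (Rp : R) js :
  0 <= nm2 R n -> 0 <= Rp -> 0 <= (inner_loop n U Rp js).2.
Proof.
move=> h0; elim: js U Rp => [|j js IH] U Rp //= hRp.
set r := (if U j < nm2 R n * Rp then _ else _).
have hr : 0 <= Rp - r.
  rewrite /r; case: ifP => [lt|_]; last by rewrite subrr.
  have [->|nz] := eqVneq (nm2 R n) 0; first by rewrite invr0 mulr0 subr0.
  have pos : 0 < nm2 R n by rewrite lt_def nz h0.
  rewrite subr_ge0 ler_pdivrMr // mulrC; exact: ltW.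
by case: eqP => _ /=; [|apply: IH].
Qed.

Theorem propositionB2 (R : realFieldType) (n : nat) (Cu Cd Rr : nat -> R) :
  (1 <= n)%N ->
  (forall i, (i < n)%N -> 0 < Cu i) ->
  (forall i, (i < n)%N -> 0 < Cd i) ->
  (forall i, (i < n)%N -> 0 < Rr i) ->
  (forall i, (i < n)%N -> Rr i <= Cu i) ->
  (forall i, (i < n)%N -> \sum_(0 <= j < n | j != i) Rr j <= Cd i) ->
  (n%:R - 1) * (\sum_(0 <= i < n) Rr i) <= \sum_(0 <= i < n) Cu i ->
  forall alpha : nat, (1 <= alpha <= n)%N ->
    \sum_(0 <= i < n) U_iter n Cu Rr alpha.-1 i
      >= (n%:R - 2) * \sum_(alpha.-1 <= i < n) Rr i.
Proof.
move=> n1 _ _ Rpos _ _ hsum alpha /andP [a1 an].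
have : (alpha.-1 < n)%N by rewrite prednK.
elim: alpha.-1 => [_|k IH kn].
  rewrite /= sumrB.
  have -> : (n%:R - 2) * \sum_(0 <= i < n) Rr i =
            (n%:R - 1) * \sum_(0 <= i < n) Rr i - \sum_(0 <= i < n) Rr i by ring.
  by rewrite lerB.
have kn' : (k < n)%N by apply: ltnW.
have n2 : (2 <= n)%N by apply: leq_ltn_trans kn; rewrite ltnS.
have h0 : 0 <= nm2 R n.
  by rewrite /nm2 subr_ge0 (ler_nat R 2 n).
move: (IH kn') => {}IH /=.
rewrite inner_sum; last by apply/allP => j; rewrite mem_iota.
move: (@inner_nonneg R n (U_iter n Cu Rr k) (Rr k) (iota 0 n) h0 (ltW (Rpos k kn'))).
set z := (inner_loop _ _ _ _).2 => hz.
rewrite (big_ltn kn') in IH.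
rewrite /nm2 in hz h0 *.
have := mulr_ge0 h0 hz.
set s := \sum_(0 <= i < n) _.
set t := \sum_(k.+1 <= i < n) _.
move: IH; rewrite mulrDr.
move=> IH hzz.
rewrite mulrBr.
rewrite -/s -/t in IH. lra.
Qed.
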